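(* Let $\mathbb{K}\in\{\mathbb{R},\mathbb{C}\}$, $\star\in\{*,T\}$, $\epsilon_1,\epsilon_2\in\{1,-1\}$, and let $Q(\lambda)=\lambda^2M+\lambda D+K\in\mathbb{K}^{n\times n}[\lambda]$ satisfy $M^\star=\epsilon_1M$, $D^\star=\epsilon_2D$, $K^\star=\epsilon_1K$. Let $(\lambda_1,x_1)$ and $(\lambda_2,x_2)$ be eigenpairs of $Q(\lambda)$ (with $\lambda_i\in\mathbb{K}$, $x_i\in\mathbb{K}^n$). If $\lambda_2\neq\epsilon_1\epsilon_2\lambda_1^\star$, then $\lambda_2x_1^\star Mx_2+\epsilon_1\epsilon_2\lambda_1^\star x_1^\star Mx_2+x_1^\star Dx_2=0$.
   Context: For a matrix or vector $A$, $A^\star$ is $A^*$ (conjugate transpose) if $\star=*$ and $A^T$ if $\star=T$; for $\lambda\in\mathbb{C}$, $\lambda^\star=\overline{\lambda}$ if $\star=*$ and $\lambda^\star=\lambda$ if $\star=T$. An eigenpair $(\lambda_0,x_0)$ of $Q$ means $x_0\neq0$ and $(\lambda_0^2M+\lambda_0D+K)x_0=0$. *)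

(* Defs.v *)
From HB Require Import structures.
From mathcomp Require Import all_boot all_order all_algebra.
From mathcomp Require Import complex.
From mathcomp Require Import reals.
Set Implicit Arguments. Unset Strict Implicit. Unset Printing Implicit Defensive.
Import Order.TTheory GRing.Theory Num.Theory.
Local Open Scope ring_scope.

Definition Kof (R : realType) (isC : bool) : numFieldType :=
  if isC then (R[i] : numFieldType) else (R : numFieldType).

Definition kconj (R : realType) (isC : bool) : Kof R isC -> Kof R isC :=
  match isC as b return Kof R b -> Kof R b with
  | true => fun z : R[i] => Num.conj z
  | false => fun x => x
  end.

(* The two choices of star: * (conjugate transpose) or T (transpose). *)
Inductive startype := StarC | StarT.

Definition sc (R : realType) (isC : bool) (s : startype) (x : Kof R isC) :=
  match s with StarC => kconj x | StarT => x end.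

Definition smx (R : realType) (isC : bool) (s : startype) (m n : nat)
  (A : 'M[Kof R isC]_(m, n)) : 'M[Kof R isC]_(n, m) :=
  map_mx (@sc R isC s) A^T.

Definition eigenpair (F : nzRingType) (n : nat) (M D K : 'M[F]_n)
  (lam : F) (x : 'cV[F]_n) : Prop :=
  x != 0 /\ (lam ^+ 2 *: M + lam *: D + K) *m x = 0.

(* Main.v *)
Require Import Defs.
From HB Require Import structures.
From mathcomp Require Import all_boot all_order all_algebra.
From mathcomp Require Import complex reals.
From mathcomp Require Import ring.
Import Order.TTheory GRing.Theory Num.Theory.
Local Open Scope ring_scope.

Lemma gen (F : fieldType) (f : {rmorphism F -> F}) n (M D K : 'M[F]_n)
  (e1 e2 l1 l2 : F) (x1 x2 : 'cV[F]_n) :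
  e1 * e1 = 1 -> e2 * e2 = 1 ->
  map_mx f M^T = e1 *: M -> map_mx f D^T = e2 *: D -> map_mx f K^T = e1 *: K ->
  (l1 ^+ 2 *: M + l1 *: D + K) *m x1 = 0 ->
  (l2 ^+ 2 *: M + l2 *: D + K) *m x2 = 0 ->
  l2 != e1 * e2 * f l1 ->
  l2 *: (map_mx f x1^T *m M *m x2) + (e1 * e2 * f l1) *: (map_mx f x1^T *m M *m x2)
    + map_mx f x1^T *m D *m x2 = 0.
Proof.
move=> h1 h2 hM hD hK q1 q2 hne.
set y := map_mx f x1^T; set mu := e1 * e2 * f l1.
have e10 : e1 != 0 by apply/eqP => E; move: h1; rewrite E mul0r => /eqP; rewrite eq_sym oner_eq0.
have Hy : y *m (mu ^+ 2 *: M + mu *: D + K) = 0.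
  have : map_mx f ((l1 ^+ 2 *: M + l1 *: D + K) *m x1)^T = 0 by rewrite q1 trmx0 map_mx0.
  rewrite trmx_mul map_mxM !linearD /= !linearZ /= !map_mxD !map_mxZ hM hD hK rmorphXn.
  have -> : f l1 ^+ 2 *: (e1 *: M) + f l1 *: (e2 *: D) + e1 *: K
      = e1 *: (mu ^+ 2 *: M + mu *: D + K).
    rewrite !scalerDr !scalerA /mu.
    congr (_ *: _ + _ *: _ + _).
      have -> : e1 * mu ^+ 2 = (e1 * e1) * (e2 * e2) * (f l1 ^+ 2 * e1) by rewrite /mu; ring.
      by rewrite h1 h2 !mul1r.
    have -> : e1 * mu = (e1 * e1) * (f l1 * e2) by rewrite /mu; ring.
    by rewrite h1 mul1r.
  rewrite -scalemxAr => /eqP; rewrite scalemx_eq0 (negbTE e10) /= => /eqP.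
  by move=> H; rewrite -H !mulmxDr !scalemxAr.
have : y *m ((l2 ^+ 2 *: M + l2 *: D + K) - (mu ^+ 2 *: M + mu *: D + K)) *m x2 = 0.
  by rewrite mulmxBr mulmxBl Hy mul0mx subr0 -mulmxA q2 mulmx0.
have -> : (l2 ^+ 2 *: M + l2 *: D + K) - (mu ^+ 2 *: M + mu *: D + K)
   = (l2 - mu) *: ((l2 + mu) *: M + D).
  by apply/matrixP => i j; rewrite !mxE; ring.
rewrite -scalemxAr -scalemxAl => /eqP; rewrite scalemx_eq0 subr_eq0 (negbTE hne) /=.
rewrite mulmxDr mulmxDl -!scalemxAr -!scalemxAl scalerDl => /eqP.
done.
Qed.

Lemma scmorph (R : realType) (isC : bool) (s : startype) :
  exists f : {rmorphism Kof R isC -> Kof R isC}, @sc R isC s =1 f.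
Proof.
case: s; last by exists idfun.
case: isC => /=.
  pose g : {rmorphism R[i] -> R[i]} := Num.conj.
  exists g. move=> x. reflexivity.
exists idfun. move=> x. reflexivity.
Qed.

Theorem corollary2p5 (R : realType) (isC : bool) (s : startype)
  (e1 e2 : Kof R isC) (n : nat) (M D K : 'M[Kof R isC]_n)
  (lam1 lam2 : Kof R isC) (x1 x2 : 'cV[Kof R isC]_n) :
  (e1 = 1 \/ e1 = -1) -> (e2 = 1 \/ e2 = -1) ->
  smx s M = e1 *: M -> smx s D = e2 *: D -> smx s K = e1 *: K ->
  eigenpair M D K lam1 x1 -> eigenpair M D K lam2 x2 ->
  lam2 != e1 * e2 * sc s lam1 ->
  lam2 *: (smx s x1 *m M *m x2) + (e1 * e2 * sc s lam1) *: (smx s x1 *m M *m x2)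
    + smx s x1 *m D *m x2 = 0.
Proof.
move=> E1 E2 hM hD hK [_ q1] [_ q2] hne.
have h1 : e1 * e1 = 1 by case: E1 => ->; rewrite ?mulr1 ?mulrNN ?mulr1.
have h2 : e2 * e2 = 1 by case: E2 => ->; rewrite ?mulr1 ?mulrNN ?mulr1.
have [f Hf] : exists f : {rmorphism Kof R isC -> Kof R isC}, sc s =1 f.
  exact: scmorph.
have Hs : forall m k (A : 'M[Kof R isC]_(m, k)), smx s A = map_mx f A^T.
  by move=> m k A; apply: eq_map_mx.
rewrite !Hs in hM hD hK *; rewrite Hf in hne *.
exact: gen h1 h2 hM hD hK q1 q2 hne.
Qed.
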